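(* Assume the setting and standing assumptions described in the context. Let $0<\tau_i\le\tau_{i+1}$ and let $\underline{M}_{\tau_i},\underline{M}_{\tau_{i+1}}\subset\mathbb{R}^n$ be inner-approximations of the isochronous manifolds $M_{\tau_i}$ and $M_{\tau_{i+1}}$ respectively. Assume that each of $\underline{M}_{\tau_i}$ and $\underline{M}_{\tau_{i+1}}$ has the ray property (for every $x\in\mathbb{R}^n\setminus\{0\}$ there exists a unique $\lambda_x>0$ with $\lambda_x x$ in the set), and that the pair has the encirclement property (for every $x\in\underline{M}_{\tau_i}$ there exists a unique $\lambda_x\in(0,1)$ with $\lambda_x x\in\underline{M}_{\tau_{i+1}}$, and there is no $\kappa_x\ge1$ with $\kappa_x x\in\underline{M}_{\tau_{i+1}}$). Define $$\mathcal{R}_i=\{x\in\mathbb{R}^n:\ \exists\kappa_x\ge1\text{ with }\kappa_x x\in\underline{M}_{\tau_i}\ \text{and}\ \exists\lambda_x\in(0,1)\text{ with }\lambda_x x\in\underline{M}_{\tau_{i+1}}\}.$$ Then $\tau_i\le\tau(x)$ for all $x\in\mathcal{R}_i$.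
   Context: Let $f:\mathbb{R}^n\times\mathbb{R}^m\to\mathbb{R}^n$ and a feedback law $\upsilon:\mathbb{R}^n\to\mathbb{R}^m$ be given. Define $F:\mathbb{R}^{2n}\to\mathbb{R}^{2n}$ by $F(z,e)=\big(f(z,\upsilon(z+e)),\,-f(z,\upsilon(z+e))\big)$. For $x\in\mathbb{R}^n$, $\xi(t;x)$ denotes the solution of $\dot\xi=F(\xi)$ with $\xi(0;x)=(x,0)$. A triggering function $\phi:\mathbb{R}^{2n}\to\mathbb{R}$ is given, and $\tau(x)=\inf\{t>0:\phi(\xi(t;x))=0\}$. The isochronous manifold of time $\tau_\star>0$ is $M_{\tau_\star}=\{x:\tau(x)=\tau_\star\}$. A set $\underline{M}_{\tau_\star}\subset\mathbb{R}^n$ is an inner-approximation of $M_{\tau_\star}$ if for every $x\in\underline{M}_{\tau_\star}$ there exists $\kappa_x\ge1$ with $\kappa_x x\in M_{\tau_\star}$ and there is no $\lambda_x\in(0,1)$ with $\lambda_x x\in M_{\tau_\star}$. Standing assumptions: (i) $F$ is smooth and homogeneous of degree $\alpha\ge1$ with all weights $1$, i.e. $F(\lambda\xi)=\lambda^{\alpha+1}F(\xi)$ for all $\lambda>0$; (ii) $\phi$ is smooth and homogeneous of degree $\theta\ge1$ with weights $1$, i.e. $\phi(\lambda\xi)=\lambda^{\theta+1}\phi(\xi)$ for all $\lambda>0$; (iii) for every $x\neq0$, $\phi((x,0))<0$ and there exists $t_x\in(0,\infty)$ with $\phi(\xi(t_x;x))=0$; (iv) compact sets $\mathrm{Z}\subset\mathbb{R}^n$,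 $\Xi\subset\mathbb{R}^{2n}$ containing a neighbourhood of the origin are given such that for all $x\in\mathrm{Z}$, $t\ge0$: $\phi(\xi(t;x))\le0\Rightarrow\xi(t;x)\in\Xi$; (v) the origin is the only equilibrium of $\dot\zeta=f(\zeta,\upsilon(\zeta))$. *)

(* Defs.v *)
(* Vectors of R^k are row vectors 'rV[R]_k;
   a point (z,e) of R^{2n} is row_mx z e : 'rV[R]_(n + n). *)
From HB Require Import structures.
From mathcomp Require Import all_boot all_order all_algebra.
From mathcomp Require Import all_classical all_reals all_analysis.
Set Implicit Arguments. Unset Strict Implicit. Unset Printing Implicit Defensive.
Import Order.TTheory GRing.Theory Num.Theory.
Import numFieldNormedType.Exports.
Local Open Scope classical_set_scope.
Local Open Scope ring_scope.

Section Defs.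
Context {R : realType}.

Fixpoint iter_dderive {V W : normedModType R} (vs : seq V) (f : V -> W) : V -> W :=
  match vs with
  | [::] => f
  | v :: vs' => fun x => 'D_v (iter_dderive vs' f) x
  end.

Definition smooth {V W : normedModType R} (f : V -> W) : Prop :=
  forall vs : seq V,
    continuous (iter_dderive vs f) /\
    (forall (v x : V), derivable (iter_dderive vs f) x v).

Definition Fcl {n m : nat} (f : 'rV[R]_n -> 'rV[R]_m -> 'rV[R]_n)
  (u : 'rV[R]_n -> 'rV[R]_m) (w : 'rV[R]_(n + n)) : 'rV[R]_(n + n) :=
  let z := lsubmx w in let e := rsubmx w in
  row_mx (f z (u (z + e))) (- f z (u (z + e))).

Definition is_solution_flow {n : nat} (F : 'rV[R]_(n + n) -> 'rV[R]_(n + n))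
  (xi : 'rV[R]_n -> R -> 'rV[R]_(n + n)) : Prop :=
  forall x : 'rV[R]_n,
    xi x 0 = row_mx x 0 /\
    {within `[0, +oo[, continuous (xi x)} /\
    (forall t : R, 0 < t -> is_derive t 1 (xi x) (F (xi x t))).

Definition tau {n : nat} (phi : 'rV[R]_(n + n) -> R)
  (xi : 'rV[R]_n -> R -> 'rV[R]_(n + n)) (x : 'rV[R]_n) : R :=
  inf [set t : R | 0 < t /\ phi (xi x t) = 0].

Definition isochron {n : nat} (phi : 'rV[R]_(n + n) -> R)
  (xi : 'rV[R]_n -> R -> 'rV[R]_(n + n)) (ts : R) : set 'rV[R]_n :=
  [set x | tau phi xi x = ts].

Definition inner_approx {n : nat} (A M : set 'rV[R]_n) : Prop :=
  forall x, A x ->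
    (exists k : R, 1 <= k /\ M (k *: x)) /\
    ~ (exists l : R, 0 < l < 1 /\ M (l *: x)).

Definition ray_property {n : nat} (A : set 'rV[R]_n) : Prop :=
  forall x : 'rV[R]_n, x != 0 -> exists! l : R, 0 < l /\ A (l *: x).

Definition encirclement {n : nat} (A B : set 'rV[R]_n) : Prop :=
  forall x, A x ->
    (exists! l : R, 0 < l < 1 /\ B (l *: x)) /\
    ~ (exists k : R, 1 <= k /\ B (k *: x)).

Definition region {n : nat} (A B : set 'rV[R]_n) : set 'rV[R]_n :=
  [set x | (exists k : R, 1 <= k /\ A (k *: x)) /\
           (exists l : R, 0 < l < 1 /\ B (l *: x))].

End Defs.

(* Main.v *)
Require Import Defs.
From HB Require Import structures.
From mathcomp Require Import all_boot all_order all_algebra.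
From mathcomp Require Import all_classical all_reals all_analysis.
From mathcomp Require Import lra.
Import Order.TTheory GRing.Theory Num.Theory.
Import numFieldNormedType.Exports.
Local Open Scope classical_set_scope.
Local Open Scope ring_scope.

Section Aux.
Context {R : realType} {N : nat}.
Local Notation V := 'rV[R]_N.

Lemma coord_le (v : V) i : `|v ord0 i| <= `|v|.
Proof.
rewrite [X in _ <= X]/Num.Def.normr /= mx_normrE.
exact: (le_bigmax _ (fun ij : 'I_1 * 'I_N => `|v ij.1 ij.2|) (ord0, i)).
Qed.

Lemma norm_le_coord (v : V) B : 0 <= B -> (forall i, `|v ord0 i| <= B) -> `|v| <= B.
Proof.
move=> B0 H; rewrite [X in X <= _]/Num.Def.normr /= mx_normrE.
apply: bigmax_le => // -[i j] _ /=.
by rewrite (ord1 i); exact: H.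
Qed.

Lemma vmvt (g dg : R -> V) a b M : a <= b ->
  {within `[a, b], continuous g} ->
  (forall r, r \in `]a, b[ -> is_derive r 1 g (dg r)) ->
  (forall r, r \in `]a, b[ -> `|dg r| <= M) ->
  `|g b - g a| <= M * (b - a).
Proof.
rewrite le_eqVlt => /predU1P[<- _ _ _|ab gc gd gM].
  by rewrite !subrr normr0 mulr0.
have M0 : 0 <= M.
  apply: le_trans (gM ((a + b) / 2) _); first exact: normr_ge0.
  exact: mid_in_itvoo.
apply: norm_le_coord; first by rewrite mulr_ge0 // subr_ge0 ltW.
move=> i.
pose h r := g r ord0 i.
have hd : forall r, r \in `]a, b[ -> is_derive r 1 h (dg r ord0 i).
  move=> r /gd [dv dval]; apply: DeriveDef.
    by move/derivable_mxP: dv; apply.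
  rewrite -dval derive_mx // mxE //.
have hc : {within `[a, b], continuous h}.
  apply: (@within_continuous_comp _ _ _ _ g (fun M : V => M ord0 i)) => //.
  by move=> y _; exact: coord_continuous.
have [c cab hE] := MVT ab hd hc.
rewrite !mxE -/(h b) -/(h a) hE normrM [`|b - a|]ger0_norm; last by rewrite subr_ge0 ltW.
apply: ler_wpM2r; first by rewrite subr_ge0 ltW.
apply: le_trans (gM c cab); exact: coord_le.
Qed.

Lemma line_is_derive (W : normedModType R) (F : V -> W) (p e : V) (s : R) :
  derivable F (p + s *: e) e ->
  is_derive s 1 (fun r : R => F (p + r *: e)) ('D_e F (p + s *: e)).
Proof.
move=> dF.
have E : (fun h : R => h^-1 *: (((fun r : R => F (p + r *: e)) \o shift s) (h *: 1)
     - (fun r : R => F (p + r *: e)) s))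
   = (fun h : R => h^-1 *: ((F \o shift (p + s *: e)) (h *: e) - F (p + s *: e))).
  apply/funext => h /=; congr (_ *: (F _ - _)).
  by rewrite /shift /= [h%:A]mulr1 scalerDl addrCA addrC.
have dv : derivable (fun r : R => F (p + r *: e)) s 1 by rewrite /derivable E.
apply: DeriveDef => //.
by rewrite /derive E.
Qed.

Definition inbox (B : R) (v : V) := forall i, `|v ord0 i| <= B.

Lemma box_compact B : compact (inbox B).
Proof.
have -> : inbox B = [set v : V | forall i, [set` `[-B, B]] (v ord0 i)].
  by apply/seteqP; split => v /= H i; move: (H i);
  rewrite /= in_itv /= ler_norml.
apply: (@rV_compact _ N (fun=> [set` `[-B, B]])) => i; exact: segment_compact.
Qed.

Lemma lip_box (F : V -> V) : continuous F -> (forall v x, derivable F x v) ->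
  (forall v, continuous ('D_v F)) ->
  forall B, 0 <= B -> exists L : R, (0 <= L) /\ (forall a b,
    inbox B a -> inbox B b -> `|F b - F a| <= L * `|b - a|).
Proof.
move=> Fc Fd Dc B B0.
pose e (k : 'I_N) : V := \row_j ((j == k :> nat)%:R).
have : forall k, exists C : R, forall y, inbox B y -> `|'D_(e k) F y| <= C.
  move=> k.
  have [|||c _ Hc] := @EVT_max_rV R N (fun y => `|'D_(e k) F y|) (inbox B).
  - by exists 0 => i; rewrite mxE normr0.
  - exact: box_compact.
  - apply: continuous_subspaceT => y.
    apply: (continuous_comp (Dc (e k) y)); exact: norm_continuous.
  by exists (`|'D_(e k) F c|) => y Hy; apply: Hc; rewrite inE.
case/fin_all_exists => C HC.
exists (\sum_k `|C k|); split; first by apply: sumr_ge0 => k _.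
move=> a b Ha Hb.
pose p (j : nat) : V := \row_i (if (i < j)%N then b ord0 i else a ord0 i).
have p0 : p 0%N = a by apply/rowP => i; rewrite !mxE ltn0.
have pN : p N = b by apply/rowP => i; rewrite !mxE ltn_ord.
have pS : forall k : 'I_N, p k.+1 = p k + (b ord0 k - a ord0 k) *: e k.
  move=> k; apply/rowP => i; rewrite !mxE ltnS.
  case: (ltngtP i k) => [ik|ik|/val_inj ->].
  - by rewrite mulr0 addr0.
  - by rewrite mulr0 addr0.
  - by rewrite mulr1 addrC subrK.
have inb : forall (k : 'I_N) s, (0 <= s <= b ord0 k - a ord0 k) \/
    (b ord0 k - a ord0 k <= s <= 0) -> inbox B (p k + s *: e k).
  move=> k s Hs i; rewrite !mxE.
  case: (ltngtP i k) => [ik|ik|/val_inj ->].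
  - by rewrite mulr0 addr0; exact: Hb.
  - by rewrite mulr0 addr0; exact: Ha.
  - rewrite mulr1.
    have := Ha k; have := Hb k; rewrite !ler_norml.
    move=> /andP[? ?] /andP[? ?].
    by case: Hs => /andP[? ?]; apply/andP; split; lra.
have step : forall k : 'I_N, `|F (p k.+1) - F (p k)| <= `|C k| * `|b - a|.
  move=> k; rewrite pS.
  set d := b ord0 k - a ord0 k.
  have gc : forall A : set R, {within A, continuous (fun r : R => F (p k + r *: e k))}.
    move=> A; apply: continuous_subspaceT => r.
    apply: (@continuous_comp _ _ _ (fun r : R => p k + r *: e k) F); last exact: Fc.
    apply: continuousD; first exact: cst_continuous.
    exact: scalel_continuous.
  have gd : forall r : R, is_derive r (1 : R) (fun r : R => F (p k + r *: e k))
      ('D_(e k) F (p k + r *: e k)).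
    by move=> r; apply: line_is_derive; exact: Fd.
  have H1 : `|F (p k + d *: e k) - F (p k)| <= `|C k| * `|d|.
    case: (leP 0 d) => d0.
    - have := @vmvt _ (fun r => 'D_(e k) F (p k + r *: e k)) 0 d `|C k| d0 (gc _)
        (fun r _ => gd r) _.
      rewrite scale0r addr0 subr0 [`|d|]ger0_norm //; apply.
      move=> r; rewrite in_itv /= => /andP[r0 rd].
      apply: le_trans (ler_norm _); apply: HC; apply: inb.
      by left; rewrite /d ltW // ltW.
    - have := @vmvt _ (fun r => 'D_(e k) F (p k + r *: e k)) d 0 `|C k| (ltW d0) (gc _)
        (fun r _ => gd r) _.
      rewrite scale0r addr0 sub0r [`|d|]ltr0_norm // distrC; apply.
      move=> r; rewrite in_itv /= => /andP[r0 rd].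
      apply: le_trans (ler_norm _); apply: HC; apply: inb.
      by right; rewrite ltW // ltW.
  apply: le_trans H1 _; apply: ler_wpM2l => //.
  by have := coord_le (b - a) k; rewrite !mxE.
have -> : F b - F a = \sum_(0 <= j < N) (F (p j.+1) - F (p j)).
  by rewrite telescope_sumr // p0 pN.
rewrite big_mkord mulr_suml.
apply: le_trans (ler_norm_sum _ _ _) _.
by apply: ler_sum => k _; exact: step k.
Qed.

Lemma uniq_sol (F : V -> V) :
  (forall B, 0 <= B -> exists L : R, (0 <= L) /\ (forall a b,
    inbox B a -> inbox B b -> `|F b - F a| <= L * `|b - a|)) ->
  forall y1 y2 : R -> V,
  {within `[0, +oo[, continuous y1} -> {within `[0, +oo[, continuous y2} ->
  y1 0 = y2 0 ->
  (forall t : R, 0 < t -> is_derive t (1 : R) y1 (F (y1 t))) ->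
  (forall t : R, 0 < t -> is_derive t (1 : R) y2 (F (y2 t))) ->
  forall t : R, 0 <= t -> y1 t = y2 t.
Proof.
move=> LB y1 y2 c1 c2 e0 d1 d2 T T0.
have sub : forall a b : R, 0 <= a -> `[a, b] `<=` `[0, +oo[.
  move=> a b a0 x; rewrite /= !in_itv /= andbT => /andP[ax _].
  exact: le_trans ax.
have cT1 : forall a b, 0 <= a -> {within `[a, b], continuous y1}.
  by move=> a b a0; apply: continuous_subspaceW c1; exact: sub.
have cT2 : forall a b, 0 <= a -> {within `[a, b], continuous y2}.
  by move=> a b a0; apply: continuous_subspaceW c2; exact: sub.
have cD : forall a b, 0 <= a -> {within `[a, b], continuous (fun r => y1 r - y2 r)}.
  move=> a b a0 x; apply: cvgB; [exact: cT1 | exact: cT2].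
have cn : {within `[0, T], continuous (fun r => `|y1 r| + `|y2 r|)}.
  move=> x; apply: cvgD.
  - exact: (continuous_comp (cT1 0 T (lexx _) x) (@norm_continuous _ _ _)).
  - exact: (continuous_comp (cT2 0 T (lexx _) x) (@norm_continuous _ _ _)).
have [Bm _ HBm] := EVT_max T0 cn.
set B := `|y1 Bm| + `|y2 Bm| in HBm.
have B0 : 0 <= B by rewrite addr_ge0.
have inb1 : forall r, 0 <= r <= T -> inbox B (y1 r).
  move=> r rT j; apply: le_trans (coord_le _ _) _.
  apply: le_trans (HBm r _); last by rewrite in_itv.
  by rewrite lerDl.
have inb2 : forall r, 0 <= r <= T -> inbox B (y2 r).
  move=> r rT j; apply: le_trans (coord_le _ _) _.
  apply: le_trans (HBm r _); last by rewrite in_itv.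
  by rewrite lerDr.
have [L [L0 HL]] := LB B B0.
pose h := (2 * (L + 1))^-1.
have h0 : 0 < h by rewrite invr_gt0; lra.
have hne : 2 * (L + 1) != 0 by rewrite gt_eqF //; lra.
have hE : h * (2 * (L + 1)) = 1 by rewrite mulVf.
have claim : forall k : nat, forall t, 0 <= t <= T -> t <= k%:R * h -> y1 t = y2 t.
  elim=> [|k IH] t /andP[t0 tT] tk.
    by have -> : t = 0 by move: tk; rewrite mul0r; lra.
  case: (leP t (k%:R * h)) => tk'; first by apply: IH => //; rewrite t0.
  set s := k%:R * h in tk'.
  have s0 : 0 <= s by rewrite mulr_ge0 // ltW.
  have ys : y1 s = y2 s by apply: IH; rewrite ?s0 //= (ltW (lt_le_trans tk' tT)).
  have cn' : {within `[s, t], continuous (fun r => `|y1 r - y2 r|)}.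
    move=> x; exact: (continuous_comp (cD s t s0 x) (@norm_continuous _ _ _)).
  have [c cst Hc] := EVT_max (ltW tk') cn'.
  move: cst; rewrite in_itv /= => /andP[sc ct].
  have Hv : `|y1 c - y2 c| <= L * `|y1 c - y2 c| * (c - s).
    have := @vmvt (fun r => y1 r - y2 r) (fun r => F (y1 r) - F (y2 r)) s c
       (L * `|y1 c - y2 c|) sc (cD s c s0).
    rewrite ys subrr subr0; apply.
    - move=> r; rewrite in_itv /= => /andP[sr rc].
      have r0 : 0 < r by apply: le_lt_trans sr.
      exact: is_deriveB (d1 r r0) (d2 r r0).
    - move=> r; rewrite in_itv /= => /andP[sr rc].
      have rT : 0 <= r <= T.
        by rewrite (le_trans s0 (ltW sr)) /= (le_trans (ltW rc) (le_trans ct tT)).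
      apply: le_trans (HL _ _ (inb2 r rT) (inb1 r rT)) _.
      apply: (ler_wpM2l L0); apply: Hc.
      by rewrite in_itv /= (ltW sr) /= (le_trans (ltW rc) ct).
  set D := `|y1 c - y2 c| in Hv.
  have D0 : D <= 0.
    have D0' : 0 <= D by exact: normr_ge0.
    move: tk; rewrite mulrS mulrDl mul1r -/s => tk.
    have chs : c - s <= h by lra.
    have cs0 : 0 <= c - s by lra.
    have LD0 : 0 <= L * D by rewrite mulr_ge0.
    have H2 : L * D * (c - s) <= L * D * h by apply: ler_wpM2l.
    nra.
  have : `|y1 t - y2 t| <= 0.
    by apply: le_trans (Hc t _) D0; rewrite in_itv /= (ltW tk') lexx.
  by rewrite normr_le0 subr_eq0 => /eqP.
have [k Hk] : exists k : nat, T <= k%:R * h.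
  exists (Num.Def.trunc (T / h)).+1.
  by have := truncnS_gt (T / h); rewrite ltr_pdivrMr // => /ltW.
by apply: (claim k) => //; rewrite T0 lexx.
Qed.

End Aux.

Lemma is_derive_time {R : realType} (W : normedModType R) (f : R -> W) (c s : R) (df : W) :
  is_derive (c * s) (1 : R) f df -> is_derive s (1 : R) (fun r => f (c * r)) (c *: df).
Proof.
move=> [fd fv].
have hm : is_derive s (1 : R) (fun r : R => c * r) c.
  have := @is_deriveZ R R R id c s 1 1 (is_derive_id s (1 : R)).
  rewrite /GRing.scale /= mulr1 => H.
  exact: H.
have df1 : differentiable f (c * s) by apply/derivable1_diffP.
have dm : differentiable (fun r : R => c * r) s.
  by apply/derivable1_diffP; case: hm.
have dc : differentiable (f \o (fun r : R => c * r)) s by exact: differentiable_comp.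
apply: DeriveDef; first by apply/derivable1_diffP.
rewrite -derive1E derive1E' // diff_comp //.
have E : 'd ( *%R c) s 1 = c.
  by rewrite -derive1E' // derive1E; case: hm.
rewrite /= E (deriv1E (f := f)) // derive1E fv /=.
done.
Qed.

Lemma at_right_scale {R : realType} (c : R) : 0 < c ->
  (fun x => c * x) @ (0 : R)^'+ --> (0 : R)^'+.
Proof.
move=> c0 A [e /= e0 He]; exists (e / c); first by rewrite /= divr_gt0.
move=> y /= ye y0.
apply: He; last exact: mulr_gt0.
move: ye; rewrite /ball_ /= !sub0r !normrN !gtr0_norm ?mulr_gt0 // => ye.
by rewrite -ltr_pdivlMl // mulrC.
Qed.

Lemma within_scale {R : realType} (W : normedModType R) (f : R -> W) (c : R) : 0 < c ->
  {within `[0, +oo[, continuous f} ->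
  {within `[0, +oo[, continuous (fun s => f (c * s))}.
Proof.
move=> c0 /continuous_within_itvcyP [fin fr].
apply/continuous_within_itvcyP; split.
  move=> x; rewrite in_itv /= andbT => x0.
  apply: (@continuous_comp _ _ _ (fun s : R => c * s) f).
    exact: mulrl_continuous.
  by apply: fin; rewrite in_itv /= andbT mulr_gt0.
rewrite mulr0.
exact: (cvg_comp _ _ (@at_right_scale _ c c0) fr).
Qed.

Theorem corollary1 (R : realType) (n m : nat)
  (f : 'rV[R]_n -> 'rV[R]_m -> 'rV[R]_n) (u : 'rV[R]_n -> 'rV[R]_m)
  (xi : 'rV[R]_n -> R -> 'rV[R]_(n + n)) (phi : 'rV[R]_(n + n) -> R)
  (alpha theta : R) (Z : set 'rV[R]_n) (Xi : set 'rV[R]_(n + n))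
  (tau_i tau_i1 : R) (Mi Mi1 : set 'rV[R]_n) :
  is_solution_flow (Fcl f u) xi ->
  (* (i) *)
  smooth (Fcl f u) -> 1 <= alpha ->
  (forall (l : R) (w : 'rV[R]_(n + n)), 0 < l ->
      Fcl f u (l *: w) = (l `^ (alpha + 1)) *: Fcl f u w) ->
  (* (ii) *)
  smooth phi -> 1 <= theta ->
  (forall (l : R) (w : 'rV[R]_(n + n)), 0 < l ->
      phi (l *: w) = (l `^ (theta + 1)) * phi w) ->
  (* (iii) *)
  (forall x : 'rV[R]_n, x != 0 ->
      phi (row_mx x 0) < 0 /\ exists t : R, 0 < t /\ phi (xi x t) = 0) ->
  (* (iv) *)
  compact Z -> compact Xi -> Z \in nbhs (0 : 'rV[R]_n) ->
  Xi \in nbhs (0 : 'rV[R]_(n + n)) ->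
  (forall (x : 'rV[R]_n) (t : R), Z x -> 0 <= t ->
      phi (xi x t) <= 0 -> Xi (xi x t)) ->
  (* (v) *)
  (forall z : 'rV[R]_n, f z (u z) = 0 -> z = 0) ->
  (* the corollary *)
  0 < tau_i -> tau_i <= tau_i1 ->
  inner_approx Mi (isochron phi xi tau_i) ->
  inner_approx Mi1 (isochron phi xi tau_i1) ->
  ray_property Mi -> ray_property Mi1 ->
  encirclement Mi Mi1 ->
  forall x : 'rV[R]_n, region Mi Mi1 x -> tau_i <= tau phi xi x.
Proof.
move=> Hsol Hsm a1 HF _ _ Hphi H3 _ _ _ _ _ _ ti0 _ HMi _ _ _ _ x [[k [k1 Mk]] _].
have [kap [kap1 Hk]] := (HMi _ Mk).1.
rewrite /isochron /= scalerA in Hk.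
set K := kap * k in Hk.
have K1 : 1 <= K by exact: mulr_ege1.
have K0 : 0 < K by lra.
set F := Fcl f u.
have Fc : continuous F by have [] := Hsm [::].
have Fd : forall v y, derivable F y v by have [] := Hsm [::].
have Dc : forall v, continuous ('D_v F) by move=> v; have [] := Hsm [:: v].
have LB := @lip_box _ _ F Fc Fd Dc.
have [xz|x0] := eqVneq x 0.
  by move: Hk; rewrite xz scaler0 => <-.
set c := K `^ alpha.
have c1 : 1 <= c.
  by have := ler_powR K1 (_ : 0 <= alpha); rewrite powRr0; apply; lra.
have c0 : 0 < c by lra.
have Huniq : forall s, 0 <= s -> xi (K *: x) s = K *: xi x (c * s).
  have [s1 [s2 s3]] := Hsol (K *: x).
  have [t1 [t2 t3]] := Hsol x.
  apply: (@uniq_sol _ _ F LB (xi (K *: x)) (fun s => K *: xi x (c * s))) => //.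
  - apply: (@within_scale _ _ (fun r => K *: xi x r)) => // r.
    exact: cvgZl_tmp (t2 r).
  - by rewrite s1 mulr0 t1 scale_row_mx scaler0.
  - move=> t t0.
    have H1 := @is_derive_time _ _ _ _ _ _ (t3 _ (mulr_gt0 c0 t0)).
    have H := @is_deriveZ _ _ _ _ K _ _ _ H1.
    apply: is_derive_eq.
    rewrite /F HF // scalerA; congr (_ *: _).
    rewrite powRD; last by apply/implyP => _; rewrite gt_eqF.
    by rewrite powRr1 ?(ltW K0) // mulrC.
have lbK : has_lbound [set t : R | 0 < t /\ phi (xi (K *: x) t) = 0].
  by exists 0 => r [r0 _]; exact: ltW.
rewrite -Hk /tau.
have [_ [t0 [t0p t0z]]] := H3 x x0.
apply: lb_le_inf; first by exists t0.
move=> t [tp tz].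
apply: (@le_trans _ _ (t / c)).
  apply: ge_inf => //; split; first by rewrite divr_gt0.
  rewrite Huniq; last by rewrite divr_ge0 // ltW.
  by rewrite Hphi // [c * _]mulrC divfK ?gt_eqF // tz mulr0.
by rewrite ler_pdivrMr //; nra.
Qed.
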